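(* Assume the hypothesis (H3) below holds. Then for any $v\in V_0(E)$ and any finite configuration $\xi$, the function $t\mapsto H_t(\xi)=\dfrac{\det J(\phi^v_t(\xi))}{\det J(\xi)}$ is differentiable and, for $T>0$, $$\sup_{|t|\le T}\Big|\frac{\mathrm dH_t(\xi)}{\mathrm dt}\Big|\le\frac{u_{|\xi|}}{\det J(\xi)},$$ where $(u_n,\,n\ge0)$ is a sequence of nonnegative numbers satisfying $\sum_n\frac{u_n}{n!}|x|^n<\infty$ for all $x\in\mathbb R$.
   Context: $E$ is a domain of $\mathbb R^d$ with Radon measure $\lambda$; $K$ is a bounded symmetric Hilbert–Schmidt integral operator on $L^2(E,\lambda)$, kernel $K(x,y)$, spectrum in $[0,1)$, locally trace class; $\Lambda$ is a fixed compact set and $J(x,y)$ is the kernel of $J_{\Lambda,-1}=(I-K_\Lambda)^{-1}K_\Lambda$, $K_\Lambda=P_\Lambda KP_\Lambda$. For $\xi=\{x_1,\dots,x_n\}$, $\det J(\xi)=\det(J(x_i,x_k))_{i,k}$ and $|\xi|=n$; $U(\xi)=-\log\det J(\xi)$. $V_0(E)$: smooth compactly supported vector fields; $\phi^v_t$ the flow of $v$, acting on configurations atom by atom. $\nabla_vU(\xi)=\frac{\mathrm d}{\mathrm dt}U(\phi^v_t(\xi))|_{t=0}$. Hypothesis (H3): $U$ is differentiable at every finite configuration, and for any $v\in V_0(E)$ there is $c>0$ such that for all finite $\xi$, $|\nabla_vU(\xi)|\le u_{|\xi|}/\det J(\xi)$ with $u_n=c\,n^{n/2}$ (a sequence with $\sum_n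 u_n|x|^n/n!<\infty$ for all $x$). *)

(* Defs.v *)
From HB Require Import structures.
From mathcomp Require Import all_boot all_order all_algebra.
From mathcomp Require Import all_classical all_reals all_analysis.
Set Implicit Arguments. Unset Strict Implicit. Unset Printing Implicit Defensive.
Import Order.TTheory GRing.Theory Num.Theory.
Import numFieldNormedType.Exports.
Local Open Scope classical_set_scope.
Local Open Scope ring_scope.

Section Defs.
Variables (R : realType) (d : nat).
Local Notation pt := 'rV[R]_d.

Definition iterD (us : seq pt) (f : pt -> pt) : pt -> pt :=
  foldr (fun u g => 'D_u g) f us.

Definition smooth (f : pt -> pt) : Prop :=
  forall (us : seq pt) (x : pt), differentiable (iterD us f) x.

Definition V0 (E : set pt) (v : pt -> pt) : Prop :=
  smooth v /\ compact (closure [set x | v x != 0]) /\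
  closure [set x | v x != 0] `<=` E.

(* phi is the flow of v: phi_0 = id, d/dt phi_t(x) = v(phi_t(x)),
   group law, and E is invariant. (These determine the flow of v uniquely.) *)
Definition is_flow (E : set pt) (v : pt -> pt) (phi : R -> pt -> pt) : Prop :=
  [/\ forall x, phi 0 x = x,
      forall (t : R) x, is_derive t (1 : R) (phi ^~ x) (v (phi t x)),
      forall s t x, phi (s + t) x = phi s (phi t x)
    & forall t x, E x -> E (phi t x)].

(* finite configuration in E, represented by a duplicate-free list of its atoms *)
Definition config (E : set pt) (xi : seq pt) : Prop :=
  uniq xi /\ forall x, x \in xi -> E x.

Definition Jmx (J : pt -> pt -> R) (xi : seq pt) : 'M[R]_(size xi) :=
  \matrix_(i < size xi, k < size xi) J (nth 0 xi i) (nth 0 xi k).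

Definition detJ (J : pt -> pt -> R) (xi : seq pt) : R := \det (Jmx J xi).

Definition U (J : pt -> pt -> R) (xi : seq pt) : R := - ln (detJ J xi).

(* U as a function of the positions of n atoms (rows of an n x d matrix) *)
Definition Upos (J : pt -> pt -> R) (n : nat) (y : 'M[R]_(n, d)) : R :=
  - ln (\det (\matrix_(i < n, k < n) J (row i y) (row k y))).

Definition posmx (xi : seq pt) : 'M[R]_(size xi, d) :=
  \matrix_(i < size xi, j < d) (nth 0 xi i) 0 j.

Definition flow_cfg (phi : R -> pt -> pt) (t : R) (xi : seq pt) : seq pt :=
  map (phi t) xi.

Definition gradU (J : pt -> pt -> R) (phi : R -> pt -> pt) (xi : seq pt) : R :=
  derive1 (fun t : R => U J (flow_cfg phi t xi)) 0.

Definition useq (c : R) (n : nat) : R := c * powR (n%:R) (n%:R / 2).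

Definition H3_bound (E : set pt) (J : pt -> pt -> R) (phi : R -> pt -> pt)
  (c : R) : Prop :=
  forall xi, config E xi ->
    `|gradU J phi xi| <= useq c (size xi) / detJ J xi.

Definition H3 (E : set pt) (J : pt -> pt -> R) : Prop :=
  (forall xi, config E xi ->
     0 < detJ J xi /\ differentiable (Upos (n := size xi) J) (posmx xi)) /\
  (forall v phi, V0 E v -> is_flow E v phi ->
     exists2 c : R, 0 < c & H3_bound E J phi c).

Definition Ht (J : pt -> pt -> R) (phi : R -> pt -> pt) (xi : seq pt) (t : R) : R :=
  detJ J (flow_cfg phi t xi) / detJ J xi.

End Defs.

(* Main.v *)
Require Import Defs.
From HB Require Import structures.
From mathcomp Require Import all_boot all_order all_algebra.
From mathcomp Require Import all_classical all_reals all_analysis.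
Import Order.TTheory GRing.Theory Num.Theory.
Import numFieldNormedType.Exports.
Local Open Scope classical_set_scope.
Local Open Scope ring_scope.

Set Implicit Arguments. Unset Strict Implicit.
Section Aux.
Variables (R : realType) (d : nat).

Lemma Upos_eq (J : 'rV[R]_d -> 'rV[R]_d -> R) n (y : 'M[R]_(n,d)) zs
  (e : size zs = n) : (forall i : 'I_n, row i y = nth 0 zs i) ->
  Upos J y = U J zs.
Proof.
subst n => H; rewrite /Upos /U /detJ /Jmx.
by congr (- ln (\det _)); apply/matrixP => i k; rewrite !mxE !H.
Qed.

Lemma Upos_diff (J : 'rV[R]_d -> 'rV[R]_d -> R) n (y : 'M[R]_(n,d)) zs
  (e : size zs = n) : (forall i : 'I_n, row i y = nth 0 zs i) ->
  differentiable (Upos (n := size zs) J) (posmx zs) ->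
  differentiable (Upos (n := n) J) y.
Proof.
subst n => H; suff -> : y = posmx zs by [].
by apply/matrixP => i j; rewrite mxE -H mxE.
Qed.

End Aux.

Theorem mainTheorem9 (R : realType) (d : nat) (E : set 'rV[R]_d)
  (J : 'rV[R]_d -> 'rV[R]_d -> R) :
  open E -> connected E ->
  H3 E J ->
  forall (v : 'rV[R]_d -> 'rV[R]_d) (phi : R -> 'rV[R]_d -> 'rV[R]_d),
    V0 E v -> is_flow E v phi ->
    forall c : R, 0 < c -> H3_bound E J phi c ->
    forall xi : seq 'rV[R]_d, config E xi ->
      (forall t : R, derivable (Ht J phi xi) t 1) /\
      (forall T : R, 0 < T ->
        forall t : R, `|t| <= T ->
          `|derive1 (Ht J phi xi) t| <= useq c (size xi) / detJ J xi).
Proof.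
move=> _ _ [H3a _] v phi _ [phi0 dphi phiM phiE] c _ Hb xi [xiu xiE].
have cfg s : config E (flow_cfg phi s xi).
  split; last by move=> x /mapP[y yi ->]; apply/phiE/xiE.
  rewrite map_inj_uniq // => x y /(congr1 (phi (- s))).
  by rewrite -!phiM addNr !phi0.
set n := size xi.
pose F (s : R) : 'M[R]_(n, d) := \matrix_(i < n, j < d) (phi s (nth 0 xi i)) 0 j.
have rowF s (i : 'I_n) : row i (F s) = nth 0 (flow_cfg phi s xi) i.
  apply/rowP => j; rewrite !mxE /flow_cfg (nth_map 0) //.
have sz s : size (flow_cfg phi s xi) = n by rewrite size_map.
pose h s := U J (flow_cfg phi s xi).
have hE : h = Upos (n := n) J \o F.
  by apply/funext => s /=; rewrite /h (Upos_eq J (sz s) (rowF s)).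
have dF s : differentiable F s.
  apply/derivable1_diffP/derivable_mxP => i j.
  have [/derivable_mxP H _] := dphi s (nth 0 xi i).
  have -> : (fun x => F x i j) = (fun x => phi x (nth 0 xi i) 0 j).
    by apply/funext => x; rewrite /F mxE.
  exact: (H 0 j).
have dh s : derivable h s 1.
  apply/derivable1_diffP; rewrite hE; apply: differentiable_comp => //.
  have [_ dU] := H3a _ (cfg s).
  exact: (Upos_diff (sz s) (rowF s) dU).
pose g s := detJ J (flow_cfg phi s xi).
have gpos s : 0 < g s by have [] := H3a _ (cfg s).
have gE : g = expR \o (fun s => - h s).
  apply/funext => s /=; rewrite /h /U opprK lnK // posrE; exact: gpos.
have dmh s : derivable (fun s => - h s) s 1 by apply: derivableN; apply: dh.
have dg s : derivable g s 1.
  apply/derivable1_diffP; rewrite gE; apply: differentiable_comp.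
    exact/derivable1_diffP.
  exact/derivable1_diffP/derivable_expR.
have HtE : Ht J phi xi = fun s => g s * (detJ J xi)^-1 by [].
split.
  move=> t; rewrite HtE.
  exact: (derivableM (dg t) (derivable_cst _ _ _)).
move=> T _ t _.
have dpos : 0 < detJ J xi by have [] := H3a _ (conj xiu xiE).
have grad : gradU J phi (flow_cfg phi t xi) = derive1 h t.
  rewrite /gradU.
  have -> : (fun s => U J (flow_cfg phi s (flow_cfg phi t xi))) = h \o shift t.
    apply/funext => s /=; rewrite /h /flow_cfg -map_comp; congr (U J _).
    by apply: eq_map => x /=; rewrite phiM.
  rewrite derive1_comp //; have -> : derive1 (shift t) 0 = 1 by rewrite derive1E (@derive_val _ _ _ _ _ _ _ (is_derive_shift _ _ _)).
  by rewrite mulr1 /= add0r.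
have hb := Hb _ (cfg t); rewrite grad sz -/(g t) in hb.
rewrite HtE derive1Mr //.
have -> : derive1 g t = g t * - derive1 h t.
  rewrite gE derive1_comp //.
  rewrite [X in X * _]derive1E (@derive_val _ _ _ _ _ _ _ (is_derive_expR _)).
  congr (_ * _); rewrite !derive1E.
  exact: (deriveN (dh t)).
rewrite normrM normrM normrN (gtr0_norm (gpos t)) gtr0_norm ?invr_gt0 //.
rewrite ler_wpM2r //; first by rewrite invr_ge0 ltW.
apply: (le_trans (ler_wpM2l (ltW (gpos t)) hb)).
by rewrite mulrCA mulfV ?gt_eqF // mulr1.
Qed.
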